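(* Let $G=(V,E)$ be a weighted undirected graph with $n$ labeled vertices and let $k\ge1$. The running time of Algorithm 2 (described in the context), with priority queues implemented as Fibonacci heaps, is $O(k|E|+k|V|\log|V|)$.
   Context: Fibonacci heap: insert and decrease-key cost $O(1)$ amortized, pop-minimum costs $O(\log$ size$)$. Algorithm 2: input an undirected graph $G=(V,E,w)$ with non-negative weights, labeled set $\mathcal L\subseteq V$, and $k$. It keeps a global min-priority queue $Q$ of vertices and, for each $v\in V$, a local min-priority queue $Q_v$ of seeds, a list kNN$[v]$ (initially empty) and a set $S_v$ (initially empty). Initially for each $v\in\mathcal L$: insert $v$ into $Q$ with priority $0$ and $v$ into $Q_v$ with priority $0$. While $Q$ is nonempty: pop the minimum $(v_0,\mathrm{dist})$ from $Q$; pop the minimum $(\mathrm{seed},\mathrm{dist})$ from $Q_{v_0}$; add $\mathrm{seed}$ to $S_{v_0}$; append $(\mathrm{seed},\mathrm{dist})$ to kNN$[v_0]$; if kNN$[v_0]$ has fewer than $k$ entries and $Q_{v_0}$ is nonempty, insert $v_0$ into $Q$ with priority equal to the current minimum priority of $Q_{v_0}$; then for every neighbour $v$ of $v_0$ with fewer than $k$ entries in kNN$[v]$ and $\mathrm{seed}\notin S_v$, perform decrease-or-insert of $\mathrm{seed}$ in $Q_v$ and of $v$ in $Q$, both with priority $\mathrm{dist}+w(v_0,v)$ (lower the priority if present, otherwise insert). *)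

(* Defs.v *)
(* Model of Algorithm 2 (multi-source k-nearest-labeled-vertices
   search) as a nondeterministic state machine, with an explicit cost model for
   Fibonacci-heap operations (amortized costs). *)
From HB Require Import structures.
From mathcomp Require Import all_boot all_order all_algebra.
Set Implicit Arguments. Unset Strict Implicit. Unset Printing Implicit Defensive.
Import Order.TTheory GRing.Theory Num.Theory.
Local Open Scope ring_scope.

Section Algo.
Variables (R : realDomainType) (V : finType).
(* Undirected simple graph: an edge is a 2-element subset of V. *)
Variable E : {set {set V}}.
(* Weight of the edge {u,v} is w [set u; v]. *)
Variable w : {set V} -> R.
Variable L : {set V}.
Variable k : nat.

Definition adj (u v : V) : bool := [set u; v] \in E.

(* An (abstract) min-priority queue with keys in V: key |-> Some priority,
   or None if the key is absent. *)
Definition pqueue := V -> option R.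

Definition pq_size (q : pqueue) : nat := #|[pred x | isSome (q x)]|.

Definition pq_is_min (q : pqueue) (x : V) (d : R) : Prop :=
  q x = Some d /\ forall y d', q y = Some d' -> d <= d'.

Definition pq_remove (q : pqueue) (x : V) : pqueue :=
  fun y => if y == x then None else q y.

Definition pq_insert (q : pqueue) (x : V) (d : R) : pqueue :=
  fun y => if y == x then Some d else q y.

Definition pq_decr_or_insert (q : pqueue) (x : V) (d : R) : pqueue :=
  fun y => if y == x then
             match q x with Some d0 => Some (Num.min d0 d) | None => Some d end
           else q y.

Record state := State {
  sQ   : pqueue;                 (* global queue of vertices *)
  sQv  : V -> pqueue;            (* local queue of seeds, per vertex *)
  sKNN : V -> seq (V * R);
  sS   : V -> {set V}
}.

Definition init_state : state :=
  State (fun v => if v \in L then Some 0 else None)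
        (fun v s => if (v \in L) && (s == v) then Some 0 else None)
        (fun _ => [::])
        (fun _ => set0).

(* Cost of initialisation: creating the per-vertex structures, plus 2 inserts
   per labeled vertex. *)
Definition init_cost : nat := #|V| + 2 * #|L|.

(* Amortized cost of a Fibonacci-heap pop-minimum on a heap of size s. *)
Definition pop_cost (s : nat) : nat := (trunc_log 2 s).+1.

(* One iteration of the while loop, with its cost c:
   two pops, the append, a find-min and (possibly) an insert of v0 into Q,
   and, for each neighbour v of v0, the test plus (possibly) two
   decrease-or-insert operations. All O(1) operations are charged 1. *)
Definition step (s : state) (c : nat) (s' : state) : Prop :=
  exists (v0 : V) (d0 : R) (seed : V) (dist : R),
    pq_is_min (sQ s) v0 d0 /\
    pq_is_min (sQv s v0) seed dist /\
    let Q1 := pq_remove (sQ s) v0 in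
    let Qv0 := pq_remove (sQv s v0) seed in
    let S1 := fun v => if v == v0 then seed |: sS s v0 else sS s v in
    let kNN1 := fun v => if v == v0 then rcons (sKNN s v0) (seed, dist)
                         else sKNN s v in
    let cond := fun v => [&& adj v0 v, (size (kNN1 v) < k)%N & seed \notin S1 v] in
    exists Q2 : pqueue,
      (if (size (kNN1 v0) < k)%N && (0 < pq_size Qv0)%N
       then exists seed' m, pq_is_min Qv0 seed' m /\ Q2 = pq_insert Q1 v0 m
       else Q2 = Q1) /\
      s' = State
             (fun v => if cond v then pq_decr_or_insert Q2 v (dist + w [set v0; v]) v
                       else Q2 v)
             (fun v => if cond v
                       then pq_decr_or_insert (if v == v0 then Qv0 else sQv s v)
                              seed (dist + w [set v0; v])
                       else if v == v0 then Qv0 else sQv s v)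
             kNN1 S1 /\
      c = (pop_cost (pq_size (sQ s)) + pop_cost (pq_size (sQv s v0)) + 3
           + 3 * #|[set v | adj v0 v]|)%N.

Inductive reach : state -> nat -> Prop :=
| reach_init : reach init_state init_cost
| reach_step s c c' s' : reach s c -> step s c' s' -> reach s' (c + c').

End Algo.

(* Main.v *)
Require Import Defs.
From HB Require Import structures.
From mathcomp Require Import all_boot all_order all_algebra zify.
Import Order.TTheory GRing.Theory Num.Theory.

Lemma deg_sum (V : finType) (E : {set {set V}}) :
  (forall e, e \in E -> #|e| = 2) ->
  (\sum_(v : V) #|[set u | [set v; u] \in E]| <= 2 * #|E|)%N.
Proof.
move=> HE.
apply: (@leq_trans (\sum_(v : V) #|[set e in E | v \in e]|)).
  apply: leq_sum => v _.
  have inj : injective (fun u : V => [set v; u]).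
    move=> u u' /setP H; have := H u; rewrite !inE eqxx orbT => /esym /orP [/eqP Huv|/eqP //].
    subst u; have := H u'; rewrite !inE eqxx orbT.
    by rewrite orbb => /eqP ->.
  rewrite -(card_imset _ inj); apply: subset_leq_card.
  apply/subsetP => e /imsetP [u]; rewrite inE => He ->.
  by rewrite inE He !inE eqxx.
have -> : (\sum_(v : V) #|[set e in E | v \in e]| = \sum_(v : V) \sum_(e in E) (v \in e))%N.
  apply: eq_bigr => v _; rewrite -sum1dep_card.
  by rewrite big_mkcond /= [RHS]big_mkcond /=; apply: eq_bigr => e _; rewrite ?inE; case: (e \in E); case: (v \in e).
rewrite exchange_big /= mulnC -sum_nat_const; apply: leq_sum => e He.
by rewrite -(HE e He) -sum1_card [X in (_ <= X)%N]big_mkcond /=; apply/eq_leq/eq_bigr => v _; case: (v \in e).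
Qed.

Lemma arith2 c A B k P Sd Em : (c <= A + 2 * B + k * (A * (2 * P.+1 + 3) + 3 * Sd) -> B <= A -> Sd <= 2 * Em -> 1 <= k -> c <= 8 * (k * Em + k * A * P.+1))%N.
Proof.
move=> H1 H2 H3 H4.
have h1 : (A <= k * A * P.+1)%N by rewrite mulnAC leq_pmull // muln_gt0 H4.
have h2 : (k * Sd <= k * (2 * Em))%N by apply: leq_mul.
nia.
Qed.

Lemma arith c0 p1 p2 D A B S P : (c0 <= A + 2 * B + S -> p1 <= P -> p2 <= P -> c0 + (p1 + p2 + 3 + 3 * D) <= A + 2 * B + (S + (2 * P + 3 + 3 * D)))%N.
Proof. move=> *; lia. Qed.

Section Inv.
Variables (R : realDomainType) (V : finType) (E : {set {set V}})
  (w : {set V} -> R) (L : {set V}) (k : nat).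
Hypothesis HE : forall e, e \in E -> #|e| = 2.
Hypothesis Hk : (1 <= k)%N.

Let P := (trunc_log 2 #|V|).+1.
Let deg (v : V) := #|[set u | adj E v u]|.
Let F (v : V) := (2 * P + 3 + 3 * deg v)%N.

Definition Inv (s : state R V) (c : nat) : Prop :=
  [/\ forall v d, sQ s v = Some d -> (size (sKNN s v) < k)%N,
      forall v, (size (sKNN s v) <= k)%N &
      (c <= #|V| + 2 * #|L| + \sum_(v : V) size (sKNN s v) * F v)%N].

Lemma pop_le (q : pqueue R V) : (pop_cost (pq_size q) <= P)%N.
Proof. by rewrite /pop_cost /P ltnS; apply: leq_trunc_log; apply: max_card. Qed.

Lemma adj_irr v : adj E v v = false.
Proof.
rewrite /adj; apply/negP => /HE; rewrite setUid cards1 => //.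
Qed.

Lemma inv_reach s c : reach E w L k s c -> Inv s c.
Proof.
elim=> [|s0 c0 c' s' _ [I1 I2 I3] [v0 [d0 [seed [dist [[Hv0 _] [[Hseed _] Hrest]]]]]]].
  split => /=; last by rewrite big1 ?addn0.
  - by by [].
  - by by [].
move: Hrest => [Q2 [HQ2 [-> ->]]] /=.
have Hlt := I1 _ _ Hv0.
set kNN1 := fun v => if v == v0 then _ else _.
have Hsz v : size (kNN1 v) = (size (sKNN s0 v) + (v == v0))%N.
  rewrite /kNN1; case: eqP => [->|_]; by rewrite ?size_rcons ?addn1 ?addn0.
split.
{ move=> v d /=.
  case: ifP => [/and3P [_ H _] //|_].
  move: HQ2; case: ifP => [/andP [Hc _] [seed' [m [_ ->]]]|_ ->];
    rewrite /pq_insert /pq_remove; case: eqP => [->|Hne] //.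
  all: try (by move=> _; rewrite /kNN1 eqxx in Hc * ).
  all: move=> Hq; have := I1 _ _ Hq; rewrite Hsz; move/eqP/negbTE: Hne => ->; by rewrite addn0. }
- move=> v /=; rewrite Hsz; case: eqP => [->|_]; first by rewrite addn1.
  by rewrite addn0.
- rewrite /=.
  have -> : (\sum_v size (kNN1 v) * F v = \sum_v size (sKNN s0 v) * F v + F v0)%N.
    have -> : F v0 = (\sum_v (if v == v0 then F v else 0))%N by rewrite -big_mkcond big_pred1_eq.
    rewrite -big_split /=.
    by apply: eq_bigr => v _; rewrite Hsz mulnDl; case: eqP => [->|_]; rewrite ?mul1n ?mul0n.
  have H1 := pop_le (sQ s0); have H2 := pop_le (sQv s0 v0).
  have : (F v0 = 2*P+3+3*#|[set v | adj E v0 v]|)%N by [].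
  move=> HF; move: I3; set S := (\sum_v _)%N; move=> I3; rewrite HF; move: H1 H2; set p1 := pop_cost _; set p2 := pop_cost _. move=> H1 H2.
have HH := @arith c0 p1 p2 #|[set v | adj E v0 v]| _ _ _ _ I3 H1 H2. exact HH.
Qed.
End Inv.

Theorem theoremB3 :
  exists C : nat,
    forall (R : realDomainType) (V : finType) (E : {set {set V}})
           (w : {set V} -> R) (L : {set V}) (k : nat),
      (forall e, e \in E -> #|e| = 2) ->
      (forall e, e \in E -> (0 <= w e)%R) ->
      (1 <= k)%N ->
      forall (s : state R V) (c : nat),
        reach E w L k s c ->
        (c <= C * (k * #|E| + k * #|V| * (trunc_log 2 #|V|).+1))%N.
Proof.
exists 8 => R V E w L k HE _ Hk s c Hr.
have [_ I2 I3] := @inv_reach R V E w L k Hk s c Hr.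
set P := (trunc_log 2 #|V|).+1.
set Sd := (\sum_(v : V) #|[set u | adj E v u]|)%N.
have HSd : (Sd <= 2 * #|E|)%N by exact: deg_sum HE.
apply: (@arith2 c #|V| #|L| k (trunc_log 2 #|V|) Sd #|E| _ (max_card L) HSd Hk).
apply: (leq_trans I3); rewrite leq_add2l.
apply: (@leq_trans (\sum_(v : V) k * (2 * P + 3 + 3 * #|[set u | adj E v u]|))%N).
  by apply: leq_sum => v _; apply: leq_mul.
rewrite -big_distrr /= leq_mul2l; apply/orP; right.
rewrite big_split /= sum_nat_const -big_distrr /=.
exact: leqnn.
Qed.
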